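(* Let $M$ be a matroid on the edge set $E$ of a graph $G=(V,E)$, with rank function $r$. Suppose every circuit $C$ of $M$ induces a $2$-connected subgraph $(V(C),C)$ of $G$. Let $X\subseteq E$ be a connected set of $M$. Then $$\sum_{v\in V(X)}\min\{d_B(v): B\text{ a base of }X\}\le 2(r(X)+1)-|V(X)|.$$
   Context: $V(X)$ is the set of vertices incident with edges of $X$. $d_B(v)$ is the number of edges of $B$ incident with $v$. A base of $X$ is a maximal independent subset of $X$. A set $X$ is connected in $M$ if $M|_X$ is connected, i.e. every two distinct elements of $X$ lie in a common circuit contained in $X$. *)

(* Defs.v *)
From mathcomp Require Import all_boot.
Set Implicit Arguments. Unset Strict Implicit. Unset Printing Implicit Defensive.

Record matroid (E : finType) := Matroid {
  indep : {set E} -> bool;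
  indep0 : indep set0;
  indep_sub : forall A B : {set E}, A \subset B -> indep B -> indep A;
  indep_aug : forall A B : {set E}, indep A -> indep B -> #|A| < #|B| ->
                exists2 e, e \in B :\: A & indep (e |: A)
}.

Section MatroidDefs.
Variables (E : finType) (M : matroid E).

Definition rank (X : {set E}) : nat :=
  \max_(B : {set E} | indep M B && (B \subset X)) #|B|.

Definition is_base (X B : {set E}) : bool :=
  [&& B \subset X, indep M B &
      [forall B' : {set E},
         [&& B \subset B', B' \subset X & indep M B'] ==> (B' == B)]].

Definition is_circuit (C : {set E}) : Prop :=
  ~~ indep M C /\ forall e, e \in C -> indep M (C :\ e).

(* X is connected in M: M|X is connected, i.e. every two distinct elements
   of X lie in a common circuit contained in X *)
Definition mconnected (X : {set E}) : Prop :=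
  forall e f, e \in X -> f \in X -> e != f ->
    exists C : {set E}, [/\ is_circuit C, C \subset X, e \in C & f \in C].
End MatroidDefs.

(* Graphs: vertex set V, edge set E, each edge e has endpoints src e, dst e
   (parallel edges allowed, loops excluded by a hypothesis in the theorem). *)
Section GraphDefs.
Variables (V E : finType) (src dst : E -> V).

Definition ends (e : E) : {set V} := [set src e; dst e].

Definition verts (X : {set E}) : {set V} := \bigcup_(e in X) ends e.

Definition deg (B : {set E}) (v : V) : nat := #|[set e in B | v \in ends e]|.

Definition adjF (F : {set E}) : rel V :=
  fun x y => [exists e in F, (x \in ends e) && (y \in ends e)].

(* the graph (W, F) is connected (assumes F has its endpoints in W) *)
Definition gconnected (W : {set V}) (F : {set E}) : Prop :=
  forall x y, x \in W -> y \in W -> connect (adjF F) x y.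

Definition two_connected (W : {set V}) (F : {set E}) : Prop :=
  gconnected W F /\
  forall v, v \in W -> 3 <= #|W| ->
    gconnected (W :\ v) [set e in F | v \notin ends e].
End GraphDefs.

(* Main.v *)
Require Import Defs.
From mathcomp Require Import all_boot zify.
Set Implicit Arguments. Unset Strict Implicit. Unset Printing Implicit Defensive.

Lemma augment_to (E : finType) (M : matroid E) (A I : {set E}) :
  indep M A -> indep M I ->
  exists J, [/\ indep M J, A \subset J, J \subset A :|: I & #|I| <= #|J|].
Proof.
move=> iA iI.
have [k Hk] : exists k, #|I| - #|A| = k by eexists.
elim: k A iA Hk => [|k IH] A iA Hk.
  exists A; split => //; [exact: subsetUl| lia].
have: #|A| < #|I| by lia.
case/(indep_aug iA iI) => x /setDP [xI xA] ixA.
have [J [iJ sJ sJ2 cJ]] := IH (x |: A) ixA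
   (ltac:(rewrite cardsU1 xA /=; lia)).
exists J; split => //.
- by apply: subset_trans sJ; apply: subsetUr.
- apply: (subset_trans sJ2); apply/subsetP => y; rewrite !inE.
  by case/orP => [/orP [/eqP ->|->]|->]; rewrite ?xI ?orbT.
Qed.

Lemma base_extend (E : finType) (M : matroid E) (Y A : {set E}) :
  indep M A -> A \subset Y -> exists B, is_base M Y B /\ A \subset B.
Proof.
move=> iA sA.
have [k Hk] : exists k, #|Y| - #|A| <= k by exists (#|Y| - #|A|).
elim: k A iA sA Hk => [|k IH] A iA sA Hk.
  exists A; split => //; rewrite /is_base sA iA /=.
  apply/forallP => B'; apply/implyP => /and3P [s1 s2 _].
  rewrite eq_sym eqEcard s1 /=; have := subset_leq_card s2; lia.
case: (boolP [forall B' : {set E},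
         [&& A \subset B', B' \subset Y & indep M B'] ==> (B' == A)]) => H.
  by exists A; split => //; rewrite /is_base sA iA H.
move: H; rewrite negb_forall => /existsP [B'].
rewrite negb_imply => /andP [/and3P [s1 s2 i2] ne].
have lt : #|A| < #|B'|.
  by apply: proper_card; rewrite properEneq eq_sym ne s1.
have hh := subset_leq_card s2.
have [B [bB sB]] := IH B' i2 s2 (ltac:(lia)).
by exists B; split => //; apply: subset_trans sB.
Qed.

Lemma base_max (E : finType) (M : matroid E) (Y B A : {set E}) :
  is_base M Y B -> indep M A -> A \subset Y -> #|A| <= #|B|.
Proof.
case/and3P => sB iB /forallP mB iA sA.
rewrite leqNgt; apply/negP => lt.
have [x /setDP [xA xB] ix] := indep_aug iB iA lt.
have := mB (x |: B); rewrite subsetUr ix /= andbT.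
have -> : x |: B \subset Y by rewrite subUset sub1set (subsetP sA) // sB.
move=> /eqP eq; move: xB; rewrite -eq; by rewrite setU11.
Qed.

Lemma base_dep (E : finType) (M : matroid E) (Y B : {set E}) x :
  is_base M Y B -> x \in Y -> x \notin B -> ~~ indep M (x |: B).
Proof.
case/and3P => sB iB /forallP mB xY xB; apply/negP => ix.
have := mB (x |: B); rewrite subsetUr ix /= andbT.
have -> : x |: B \subset Y by rewrite subUset sub1set xY sB.
move=> /eqP eq; move: xB; rewrite -eq; by rewrite setU11.
Qed.

Lemma base_rank (E : finType) (M : matroid E) (Y B : {set E}) :
  is_base M Y B -> rank M Y = #|B|.
Proof.
move=> bB; apply/eqP; rewrite eqn_leq; apply/andP; split.
  apply/bigmax_leqP => A /andP [iA sA]; exact: base_max bB iA sA.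
case/and3P: (bB) => sB iB _.
by apply: (leq_bigmax_cond (F := fun B : {set E} => #|B|)); rewrite iB sB.
Qed.

Lemma base_exists (E : finType) (M : matroid E) (Y : {set E}) :
  exists B, is_base M Y B.
Proof.
have [B [bB _]] := base_extend (indep0 M) (sub0set Y); by exists B.
Qed.

Lemma circuit_in_dep (E : finType) (M : matroid E) (A : {set E}) :
  ~~ indep M A -> exists C, is_circuit M C /\ C \subset A.
Proof.
have [k Hk] : exists k, #|A| = k by eexists.
elim: k A Hk => [|k IH] A Hk dA.
  move: Hk => /eqP; rewrite cards_eq0 => /eqP A0.
  by move: dA; rewrite A0 indep0.
case: (boolP [forall e in A, indep M (A :\ e)]) => H.
  exists A; split => //; split => // e eA; exact: (forall_inP H).
move: H; rewrite negb_forall_in => /existsP [e /andP [eA de]].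
have [C [cC sC]] := IH (A :\ e) (ltac:(move: Hk; rewrite (cardsD1 e A) eA; lia)) de.
exists C; split => //; apply: subset_trans sC (subsetDl _ _).
Qed.


Lemma bigmin_le_seq (T : eqType) (s : seq T) (P : pred T) (F : T -> nat) x i0 :
  i0 \in s -> P i0 -> \big[minn/x]_(i <- s | P i) F i <= F i0.
Proof.
elim: s => // a s IH; rewrite inE big_cons => /orP [/eqP <- ->|hs Pi].
  exact: geq_minl.
case: (P a); last exact: IH.
by apply: leq_trans (geq_minr _ _) (IH hs Pi).
Qed.

Lemma bigmin_attain_seq (T : eqType) (s : seq T) (P : pred T) (F : T -> nat) x :
  \big[minn/x]_(i <- s | P i) F i = x \/
  exists2 i, (i \in s) && P i & \big[minn/x]_(i <- s | P i) F i = F i.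
Proof.
elim: s => [|a s IH]; first by left; rewrite big_nil.
rewrite big_cons; case Pa: (P a) => /=; last first.
  case: IH => [->|[i /andP [i1 i2] ->]]; [by left|right; exists i => //].
  by rewrite inE i1 orbT.
case: (leqP (F a) (\big[minn/x]_(i <- s | P i) F i)) => h.
  by right; exists a; rewrite ?inE ?eqxx ?Pa //; apply/minn_idPl.
case: IH => [->|[i /andP [i1 i2] e]]; [by left|right; exists i => //].
by rewrite inE i1 orbT.
Qed.


Lemma bigmin_le (T : finType) (P : pred T) (F : T -> nat) x i0 :
  P i0 -> \big[minn/x]_(i | P i) F i <= F i0.
Proof. by move=> Pi; apply: bigmin_le_seq => //; rewrite mem_index_enum. Qed.

Lemma bigmin_attain (T : finType) (P : pred T) (F : T -> nat) x i0 :
  P i0 -> (forall i, P i -> F i <= x) ->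
  exists2 i, P i & \big[minn/x]_(i | P i) F i = F i.
Proof.
move=> Pi0 Hx.
case: (bigmin_attain_seq (index_enum T) P F x) => [e|[i /andP [_ Pi] e]].
  exists i0 => //; apply/eqP; rewrite eqn_leq bigmin_le //= e; exact: Hx.
by exists i.
Qed.

Lemma sum_mem_card (T : finType) (A : {set T}) :
  \sum_(v : T) (v \in A : nat) = #|A|.
Proof.
rewrite -sum1_card [RHS]big_mkcond; apply: eq_bigr => v _; by case: (v \in A).
Qed.

Lemma deg_sum (V E : finType) (src dst : E -> V) (B : {set E}) v :
  deg src dst B v = \sum_(e in B) (v \in ends src dst e : nat).
Proof.
rewrite /deg -sum1_card big_mkcond [RHS]big_mkcond; apply: eq_bigr => e _.
by rewrite inE; case: (e \in B); case: (v \in ends src dst e).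
Qed.

Lemma handshake (V E : finType) (src dst : E -> V) (B : {set E}) :
  (forall e, src e != dst e) ->
  \sum_(v : V) deg src dst B v = 2 * #|B|.
Proof.
move=> Hl; under eq_bigr do rewrite deg_sum.
rewrite exchange_big /= -sum1_card big_distrr /=; apply: eq_bigr => e _.
by rewrite sum_mem_card /ends cards2 Hl muln1.
Qed.

Lemma in_verts (V E : finType) (src dst : E -> V) (A : {set E}) v :
  reflect (exists2 e, e \in A & v \in ends src dst e) (v \in verts src dst A).
Proof. exact: bigcupP. Qed.

Lemma ends_verts (V E : finType) (src dst : E -> V) (A : {set E}) e v :
  e \in A -> v \in ends src dst e -> v \in verts src dst A.
Proof. by move=> eA ve; apply/in_verts; exists e. Qed.

Lemma deg_zero (V E : finType) (src dst : E -> V) (B Y : {set E}) v :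
  B \subset Y -> v \notin verts src dst Y -> deg src dst B v = 0.
Proof.
move=> sB nv; apply/eqP; rewrite cards_eq0; apply/eqP/setP => e; rewrite !inE.
apply/negP => /andP [eB ve]; case/negP: nv; apply/in_verts; exists e; [exact: (subsetP sB) | by rewrite /ends !inE].
Qed.

Lemma verts_U (V E : finType) (src dst : E -> V) (A B : {set E}) :
  verts src dst (A :|: B) = verts src dst A :|: verts src dst B.
Proof. exact: bigcup_setU. Qed.

Lemma verts1 (V E : finType) (src dst : E -> V) e :
  src e != dst e -> #|verts src dst [set e]| = 2.
Proof. by move=> H; rewrite /verts big_set1 /ends cards2 H. Qed.

Lemma deg_step (V E : finType) (src dst : E -> V) (B D : {set E}) e v :
  e \in D -> e \notin B ->
  deg src dst (B :|: (D :\ e)) v + (v \in ends src dst e) <=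
  deg src dst B v + deg src dst D v.
Proof.
move=> eD eB; rewrite !deg_sum.
rewrite (bigID (fun x => x \in B)) /=.
have -> : \sum_(i in B :|: D :\ e | i \in B) (v \in ends src dst i : nat) =
          \sum_(i in B) (v \in ends src dst i : nat).
  by apply: eq_bigl => i; rewrite !inE; case: (i \in B); rewrite ?orbT ?andbF.
rewrite -addnA leq_add2l (bigD1 e eD) /= [X in _ <= X]addnC leq_add2r.
rewrite big_mkcond [X in _ <= X]big_mkcond; apply: leq_sum => i _.
rewrite !inE; case: (i \in B); rewrite ?andbF //=.
rewrite andbT -topredE /=; case: (i != e); rewrite ?andbT ?andbF //=.
Qed.


Lemma connect_closed_verts (V E : finType) (src dst : E -> V)
  (S : {set V}) (F : {set E}) a b :
  (forall g x y, g \in F -> x \in S -> x \in ends src dst g ->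
     y \in ends src dst g -> y \in S) ->
  connect (adjF src dst F) a b -> a \in S -> b \in S.
Proof.
move=> HS /connectP [p pth ->]; elim: p a pth => //= c p IH a /andP [adj pth] aS.
apply: IH pth _; move: adj; rewrite /adjF => /existsP [g /andP [gF /andP [ag cg]]].
exact: HS gF aS ag cg.
Qed.

Lemma verts_sub (V E : finType) (src dst : E -> V) (A B : {set E}) :
  A \subset B -> verts src dst A \subset verts src dst B.
Proof.
move=> sAB; apply/subsetP => v /in_verts [e eA ve]; apply/in_verts; exists e => //.
exact: (subsetP sAB).
Qed.

Lemma two_verts (V E : finType) (src dst : E -> V)
  (Hl : forall e, src e != dst e) (C Y : {set E}) f d :
  two_connected src dst (verts src dst C) C -> f \in C -> f \in Y ->
  d \in C -> d \notin Y ->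
  2 <= #|verts src dst Y :&: verts src dst (C :\: Y)|.
Proof.
move=> [Hc1 Hc2] fC fY dC dY.
set D := C :\: Y; set W0 := verts src dst Y :&: verts src dst D.
rewrite leqNgt; apply/negP => H.
have dD : d \in D by rewrite !inE dY dC.
have sDC : verts src dst D \subset verts src dst C by apply: verts_sub; exact: subsetDl.
have nd : forall g, g \in D -> src g \in verts src dst Y ->
    dst g \in verts src dst Y -> False.
  move=> g gD sY dY'.
  have : [set src g; dst g] \subset W0.
    apply/subsetP => x; rewrite !inE => /orP [] /eqP ->; rewrite ?sY ?dY' /=;
    apply/in_verts; exists g => //; by rewrite /ends !inE eqxx ?orbT.
  move/subset_leq_card; rewrite cards2 Hl; lia.
pose b := if src d \in verts src dst Y then dst d else src d.
have bY : b \notin verts src dst Y.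
  rewrite /b; case: ifP => h; last by rewrite h.
  by apply/negP => h2; exact: nd d dD h h2.
have bD : b \in verts src dst D.
  apply/in_verts; exists d => //; rewrite /b /ends; case: ifP => _; by rewrite !inE eqxx ?orbT.
have bC : b \in verts src dst C := subsetP sDC _ bD.
have fyv : forall x, x \in ends src dst f -> x \in verts src dst Y.
  by move=> x xf; apply/in_verts; exists f.
have fcv : forall x, x \in ends src dst f -> x \in verts src dst C.
  by move=> x xf; apply/in_verts; exists f.
have closure : forall g x y, g \in C -> x \in verts src dst Y ->
   x \in ends src dst g -> y \in ends src dst g -> x \notin W0 ->
   y \in verts src dst Y.
  move=> g x y gC xY xg yg xW; case: (boolP (g \in Y)) => gY.
    by apply/in_verts; exists g.
  case/negP: xW; rewrite inE xY /=; apply/in_verts; exists g => //.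
  by rewrite !inE gY gC.
have srcf : src f \in ends src dst f by rewrite /ends !inE eqxx.
have dstf : dst f \in ends src dst f by rewrite /ends !inE eqxx orbT.
have : (#|W0| == 0) || (#|W0| == 1) by move: H; case: #|W0| => [|[|]].
case/orP => [/eqP/eqP|/cards1P [w Ww]].
  rewrite cards_eq0 => /eqP W00.
  have := Hc1 (src f) b (fcv _ srcf) bC.
  move/connect_closed_verts => /(_ (verts src dst Y)) h.
  case/negP: bY; apply: h; last exact: fyv.
  move=> g x y gC xY xg yg; apply: (closure g x y) => //.
  by rewrite W00 inE.
have wW : w \in W0 by rewrite Ww inE.
have wC : w \in verts src dst C.
  by apply: (subsetP sDC); move: wW; rewrite inE => /andP [].
have wY : w \in verts src dst Y by move: wW; rewrite inE => /andP [].
pose a := if src f == w then dst f else src f.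
have aw : a != w.
  rewrite /a; case: ifP => [/eqP <-|/negbT //]; by rewrite eq_sym Hl.
have aY : a \in verts src dst Y by rewrite /a; case: ifP => _; apply: fyv.
have aC : a \in verts src dst C by rewrite /a; case: ifP => _; apply: fcv.
have bw : b != w by apply/eqP => e; move: bY; rewrite e wY.
have ab : a != b by apply/eqP => e; move: bY; rewrite -e aY.
have c3 : 3 <= #|verts src dst C|.
  rewrite (cardsD1 w) wC.
  have : [set a; b] \subset verts src dst C :\ w.
    by apply/subsetP => x; rewrite !inE => /orP [] /eqP ->; rewrite ?aw ?bw ?aC ?bC.
  by move/subset_leq_card; rewrite cards2 ab /= add1n ltnS.
have := Hc2 w wC c3 a b (ltac:(by rewrite !inE aw aC)) (ltac:(by rewrite !inE bw bC)).
move/connect_closed_verts => /(_ (verts src dst Y)) h.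
case/negP: bY; apply: h aY.
move=> g x y; rewrite inE => /andP [gC wg] xY xg yg; apply: (closure g x y) => //.
by rewrite Ww inE; apply/eqP => e; move: wg; rewrite -e xg.
Qed.


Definition circb (E : finType) (M : matroid E) (C : {set E}) :=
  ~~ indep M C && [forall e in C, indep M (C :\ e)].

Lemma circP (E : finType) (M : matroid E) (C : {set E}) :
  reflect (is_circuit M C) (circb M C).
Proof.
apply: (iffP andP) => [[d /forall_inP h]|[d h]]; split => //.
by apply/forall_inP.
Qed.

Lemma circ_sub_indep (E : finType) (M : matroid E) (C A : {set E}) e :
  is_circuit M C -> e \in C -> e \notin A -> A \subset C -> indep M A.
Proof.
move=> [_ h] eC eA sA; apply: (indep_sub _ (h e eC)).
by rewrite subsetD1 sA eA.
Qed.

Lemma card_disjU (E : finType) (A B : {set E}) :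
  A :&: B = set0 -> #|A :|: B| = #|A| + #|B|.
Proof. by move=> h; rewrite -cardsUI h cards0 addn0. Qed.

Lemma BD_dep (E : finType) (M : matroid E) (Y B C : {set E}) e :
  is_circuit M C -> is_base M Y B -> e \in C -> e \notin Y ->
  ~~ indep M (B :|: (C :\: Y)).
Proof.
move=> cC bB eC eY; apply/negP => iI.
have sBY : B \subset Y by case/and3P: bB.
have [J [iJ sJ sJ2 cJ]] := augment_to (proj2 cC e eC) iI.
have eJ : e \notin J.
  apply/negP => eJ; case: cC => dC _; case/negP: dC.
  apply: indep_sub iJ; apply/subsetP => x xC.
  case: (eqVneq x e) => [->//|xe]; apply: (subsetP sJ); by rewrite !inE xe xC.
have c1 : #|J :&: Y| <= #|B|.
  apply: base_max bB _ (subsetIr _ _); exact: indep_sub (subsetIl _ _) iJ.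
have c2 : #|J :\: Y| <= #|(C :\: Y) :\ e|.
  apply: subset_leq_card; apply/subsetP => x; rewrite !inE => /andP [xY xJ].
  have := subsetP sJ2 x xJ; rewrite !inE xY /=.
  have xe : x != e by apply/negP => /eqP ex; move: eJ; rewrite -ex xJ.
  rewrite xe /=; case/or3P => // xB.
  by move: xY; rewrite (subsetP sBY x xB).
have c3 : #|B :|: (C :\: Y)| = #|B| + #|C :\: Y|.
  apply: card_disjU; apply/setP => x; rewrite !inE.
  case xB: (x \in B) => //=; by rewrite (subsetP sBY x xB) ?andbF ?andFb.
have c4 := cardsD1 e (C :\: Y); rewrite !inE eY eC /= in c4.
have c5 := cardsID Y J.
lia.
Qed.


Lemma ear (E : finType) (M : matroid E) (X Y : {set E}) e0 f0 :
  mconnected M X -> Y \subset X -> e0 \in Y -> f0 \in X -> f0 \notin Y ->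
  exists C, [/\ is_circuit M C, C \subset X, exists2 f, f \in C & f \in Y,
    exists2 d, d \in C & d \notin Y &
    forall B e, is_base M Y B -> e \in C :\: Y ->
      is_base M (Y :|: C) (B :|: ((C :\: Y) :\ e))].
Proof.
move=> HX sYX e0Y f0X f0Y.
have e0f0 : e0 != f0 by apply/eqP => ee; move: f0Y; rewrite -ee e0Y.
have [C0 [cC0 sC0 e0C f0C]] := HX e0 f0 (subsetP sYX _ e0Y) f0X e0f0.
pose P := fun C : {set E} =>
  [&& circb M C, C \subset X, C :&: Y != set0 & C :\: Y != set0].
have PC0 : P C0.
  rewrite /P (introT (circP M C0) cC0) sC0 /=; apply/andP; split;
  apply/set0Pn; [exists e0 | exists f0]; by rewrite !inE ?e0C ?e0Y ?f0C ?f0Y.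
case: (arg_minnP (fun C => #|C :\: Y|) PC0) => C /and4P [/circP cC sCX nI nD] minC.
exists C; split => //.
- by case/set0Pn: nI => f; rewrite inE => /andP [fC fY]; exists f.
- by case/set0Pn: nD => d; rewrite inE => /andP [dY dC]; exists d.
move=> B e bB eD.
have sBY : B \subset Y by case/and3P: bB.
have [eY eC] : e \notin Y /\ e \in C by move: eD; rewrite inE => /andP [].
set D := C :\: Y.
have iB' : indep M (B :|: (D :\ e)).
  case: (boolP (indep M (B :|: (D :\ e)))) => // dep.
  have [C' [cC' sC']] := circuit_in_dep dep.
  have sC'X : C' \subset X.
    apply: subset_trans sC' _; rewrite subUset (subset_trans sBY sYX) /=.
    apply: subset_trans (subsetDl _ _) _; exact: subset_trans (subsetDl _ _) sCX.
  have nI' : C' :&: Y != set0.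
    apply/negP => /eqP I0; case: cC' => dC' _; case/negP: dC'.
    apply: (circ_sub_indep cC eC); first apply/negP => eC'.
      have := subsetP sC' e eC'; rewrite !inE eqxx /= orbF.
      by move=> eB; move: eY; rewrite (subsetP sBY e eB).
    apply/subsetP => x xC'; have := subsetP sC' x xC'; rewrite !inE.
    case/orP => [xB|/andP [_ /andP [//]]].
    have : x \in C' :&: Y by rewrite inE xC' (subsetP sBY x xB).
    by rewrite I0 inE.
  have nD' : C' :\: Y != set0.
    apply/negP => /eqP D0; case: cC' => dC' _; case/negP: dC'.
    have iB : indep M B by case/and3P: bB.
    apply: indep_sub iB; apply/subsetP => x xC'; have := subsetP sC' x xC'.
    rewrite !inE; case/orP => // /andP [_ /andP [xY _]].
    have : x \in C' :\: Y by rewrite inE xC' xY.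
    by rewrite D0 inE.
  have PC' : P C'.
    by rewrite /P (introT (circP M C') cC') sC'X nI' nD'.
  have := minC C' PC'.
  have : C' :\: Y \subset D :\ e.
    apply/subsetP => x; rewrite inE => /andP [xY xC'].
    have := subsetP sC' x xC'; rewrite inE => /orP [xB|//].
    by move: xY; rewrite (subsetP sBY x xB).
  move/subset_leq_card => h1; rewrite (cardsD1 e D) eD add1n => h3.
  by have := leq_trans h3 h1; rewrite ltnn.
have sB'Y' : B :|: (D :\ e) \subset Y :|: C.
  rewrite subUset (subset_trans sBY (subsetUl _ _)) /=.
  apply: subset_trans (subsetDl _ _) _; apply: subset_trans (subsetDl _ _) _.
  exact: subsetUr.
rewrite /is_base sB'Y' iB' /=; apply/forallP => B''; apply/implyP.
case/and3P => s1 s2 i2; rewrite eqEsubset s1 andbT.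
apply/subsetP => x xB''; case: (boolP (x \in B :|: (D :\ e))) => // xn.
exfalso.
have xY' := subsetP s2 x xB''.
case: (boolP (x \in Y)) => xY.
  have xB : x \notin B by apply/negP => xB; move: xn; rewrite inE xB.
  case/negP: (base_dep bB xY xB); apply: indep_sub i2.
  by rewrite subUset sub1set xB'' (subset_trans (subsetUl _ _) s1).
have xe : x = e.
  case: (eqVneq x e) => // xe; move: xn; rewrite !inE xe xY /=.
  by move: xY'; rewrite inE (negbTE xY) /= => ->; rewrite orbT.
case/negP: (BD_dep cC bB eC eY); apply: indep_sub i2.
rewrite subUset (subset_trans (subsetUl _ _) s1) /=.
apply/subsetP => y yD; case: (eqVneq y e) => [->|ye]; first by rewrite -xe.
by apply: (subsetP s1); rewrite !inE ye; move: yD; rewrite inE => ->; rewrite orbT.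
Qed.


Definition mdeg (V E : finType) (src dst : E -> V) (M : matroid E) (Y : {set E}) v :=
  \big[minn/#|E|]_(B : {set E} | is_base M Y B) deg src dst B v.

Lemma m_le (V E : finType) (src dst : E -> V) (M : matroid E) (Y B : {set E}) v :
  is_base M Y B -> mdeg src dst M Y v <= deg src dst B v.
Proof. move=> bB; exact: bigmin_le. Qed.

Lemma m_attain (V E : finType) (src dst : E -> V) (M : matroid E) (Y : {set E}) v :
  exists2 B, is_base M Y B & mdeg src dst M Y v = deg src dst B v.
Proof.
have [B0 bB0] := base_exists M Y.
have := bigmin_attain (P := is_base M Y) (F := fun B => deg src dst B v) (x := #|E|) bB0.
case=> [B _|B bB e]; first exact: max_card.
by exists B.
Qed.

Lemma m_zero (V E : finType) (src dst : E -> V) (M : matroid E) (Y : {set E}) v :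
  v \notin verts src dst Y -> mdeg src dst M Y v = 0.
Proof.
move=> nv; have [B0 bB0] := base_exists M Y.
apply/eqP; rewrite -leqn0; apply: leq_trans (m_le src dst v bB0) _.
by rewrite (deg_zero (B := B0) _ nv) //; case/and3P: bB0.
Qed.

Lemma sum_verts (V E : finType) (src dst : E -> V) (M : matroid E) (Y : {set E}) :
  \sum_(v in verts src dst Y) mdeg src dst M Y v = \sum_v mdeg src dst M Y v.
Proof.
rewrite [RHS](bigID (fun v => v \in verts src dst Y)) /= [X in _ = _ + X]big1 ?addn0 // => v.
exact: m_zero.
Qed.

Definition Qinv (V E : finType) (src dst : E -> V) (M : matroid E) (Y : {set E}) :=
  \sum_v mdeg src dst M Y v + #|verts src dst Y| <= 2 * (rank M Y + 1).

Lemma Q1 (V E : finType) (src dst : E -> V) (Hl : forall e, src e != dst e)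
  (M : matroid E) e : Qinv src dst M [set e].
Proof.
rewrite /Qinv verts1 //; have [B0 bB0] := base_exists M [set e].
rewrite (base_rank bB0).
have : \sum_v mdeg src dst M [set e] v <= \sum_v deg src dst B0 v.
  by apply: leq_sum => v _; exact: m_le.
rewrite handshake //; lia.
Qed.


Lemma Qstep (V E : finType) (src dst : E -> V) (Hl : forall e, src e != dst e)
  (M : matroid E)
  (Hcirc : forall C : {set E}, is_circuit M C ->
             two_connected src dst (verts src dst C) C)
  (X Y : {set E}) e0 f0 :
  mconnected M X -> Y \subset X -> e0 \in Y -> f0 \in X -> f0 \notin Y ->
  Qinv src dst M Y ->
  exists Y' : {set E}, [/\ Y' \subset X, e0 \in Y', #|Y| < #|Y'| & Qinv src dst M Y'].
Proof.
move=> HX sYX e0Y f0X f0Y QY.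
have [C [cC sCX [f fC fY] [d dC dY] Hb]] := ear HX sYX e0Y f0X f0Y.
have dD : d \in C :\: Y by rewrite inE dY dC.
exists (Y :|: C); split.
- by rewrite subUset sYX sCX.
- by rewrite inE e0Y.
- apply: proper_card; rewrite properE subsetUl /=; apply/negP => /subsetP h.
  by move: dY; rewrite (h d) // inE dC orbT.
have [B0 bB0] := base_exists M Y.
have sB0 : B0 \subset Y by case/and3P: bB0.
have bB0' := Hb B0 d bB0 dD.
have disj : forall B : {set E}, B \subset Y -> forall e, e \in C :\: Y -> e \notin B.
  move=> B sB e; rewrite inE => /andP [eY _]; apply/negP => eB.
  by move: eY; rewrite (subsetP sB e eB).
have pt : forall v, mdeg src dst M (Y :|: C) v + (v \in verts src dst (C :\: Y)) <=
                    mdeg src dst M Y v + deg src dst (C :\: Y) v.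
  move=> v; have [B bB ->] := m_attain src dst M Y v.
  have sB : B \subset Y by case/and3P: bB.
  case: (boolP (v \in verts src dst (C :\: Y))) => vD.
    case/in_verts: vD => e eD ve.
    have := deg_step src dst v eD (disj B sB e eD); rewrite ve.
    apply: leq_trans; rewrite leq_add2r; exact: m_le (Hb B e bB eD).
  have := deg_step src dst v dD (disj B sB d dD).
  apply: leq_trans; rewrite addn0; apply: leq_trans (leq_addr _ _).
  exact: m_le (Hb B d bB dD).
have sum1 : \sum_v mdeg src dst M (Y :|: C) v + #|verts src dst (C :\: Y)| <=
            \sum_v mdeg src dst M Y v + 2 * #|C :\: Y|.
  rewrite -sum_mem_card -big_split -(handshake (C :\: Y) Hl) -big_split.
  by apply: leq_sum => v _; exact: pt.
have vU : verts src dst (Y :|: C) = verts src dst Y :|: verts src dst (C :\: Y).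
  rewrite -verts_U; congr verts; apply/setP => x; rewrite !inE.
  by case: (x \in Y); case: (x \in C).
have cU := cardsUI (verts src dst Y) (verts src dst (C :\: Y)).
have two := two_verts Hl (Hcirc C cC) fC fY dC dY.
have r1 := base_rank bB0; have r2 := base_rank bB0'.
have c1 : #|B0 :|: ((C :\: Y) :\ d)| = #|B0| + #|(C :\: Y) :\ d|.
  apply: card_disjU; apply/setP => x; rewrite !inE.
  case xB: (x \in B0) => //=; by rewrite (subsetP sB0 x xB) ?andbF.
have c2 := cardsD1 d (C :\: Y); rewrite dD in c2.
move: QY; rewrite /Qinv vU r1 r2 c1 => QY.
rewrite /= in c2; lia.
Qed.

Unset Implicit Arguments. Set Strict Implicit. Set Printing Implicit Defensive.

Theorem lemma5p5 (V E : finType) (src dst : E -> V)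
  (Hnoloop : forall e, src e != dst e)
  (M : matroid E)
  (Hcirc : forall C : {set E}, is_circuit M C ->
             two_connected src dst (verts src dst C) C)
  (X : {set E}) (HX : mconnected M X) :
  \sum_(v in verts src dst X)
      \big[minn/#|E|]_(B : {set E} | is_base M X B) deg src dst B v
    + #|verts src dst X| <= 2 * (rank M X + 1).
Proof.
case: (set_0Vmem X) => [X0|[e0 e0X]].
  have -> : verts src dst X = set0.
    by rewrite /verts X0 big_set0.
  by rewrite big_set0 cards0.
have := sum_verts src dst M X; rewrite /mdeg => ->.
have main : forall k, k <= #|X| -> exists Y : {set E},
    [/\ Y \subset X, e0 \in Y, k <= #|Y| & Qinv src dst M Y].
  elim=> [_|k IH lk].
    exists [set e0]; split => //; first by rewrite sub1set.
    + by rewrite inE.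
    + exact: Q1.
  have [Y [sYX e0Y kY QY]] := IH (ltnW lk).
  case: (leqP k.+1 #|Y|) => h; first by exists Y.
  have eqk : #|Y| = k by apply/eqP; rewrite eqn_leq kY andbT -ltnS.
  have : ~~ (X \subset Y).
    by apply/negP => /subset_leq_card; rewrite eqk leqNgt lk.
  case/subsetPn => f0 f0X f0Y.
  have [Y' [sY' e0Y' lt QY']] := Qstep Hnoloop Hcirc HX sYX e0Y f0X f0Y QY.
  by exists Y'; split => //; rewrite -eqk.
have [Y [sYX _ kY QY]] := main #|X| (leqnn _).
have -> : X = Y by apply/eqP; rewrite eq_sym eqEcard sYX kY.
exact: QY.
Qed.
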